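(* Let $s\in(0,1)$, $N>2s$, $1<p<\frac{N+2s}{N-2s}$, $0<a\in L^\infty(\mathbb R^N)$, $f\in H^{-s}(\mathbb R^N)$, and $C_p:=(p\|a\|_{L^\infty})^{-\frac1{p-1}}\frac{p-1}{p}$. If $\|f\|_{H^{-s}(\mathbb R^N)}<C_pS_1^{\frac{p+1}{2(p-1)}}$, then $$\inf_{u\in H^s(\mathbb R^N),\ \|u\|_{L^{p+1}(\mathbb R^N)}=1}\Big\{C_p\|u\|_{H^s}^{\frac{2p}{p-1}}-\langle f,u\rangle\Big\}>0.$$
   Context: $\|u\|_{H^s}^2=\int_{\mathbb R^N}|u|^2+\iint_{\mathbb R^{2N}}\frac{|u(x)-u(y)|^2}{|x-y|^{N+2s}}dx\,dy$; $\langle\cdot,\cdot\rangle$ is the $H^{-s}$–$H^s$ duality; $S_1:=\inf_{u\in H^s\setminus\{0\}}\frac{\|u\|_{H^s}^2}{(\int|u|^{p+1})^{2/(p+1)}}$. *)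

(* Defs.v *)
From HB Require Import structures.
From mathcomp Require Import all_boot all_order all_algebra.
From mathcomp Require Import all_classical all_reals all_analysis.
Set Implicit Arguments. Unset Strict Implicit. Unset Printing Implicit Defensive.
Import Order.TTheory GRing.Theory Num.Theory.
Import numFieldNormedType.Exports.
Local Open Scope classical_set_scope.
Local Open Scope ring_scope.

(* Points of R^N are N-tuples of reals; N.-tuple R carries the product
   (Borel) sigma-algebra from MathComp-Analysis. *)

(* Iterated Lebesgue integral over R^n (of extended-real valued functions);
   for nonnegative measurable integrands this is the integral w.r.t. the
   n-dimensional Lebesgue measure (Tonelli). *)
Fixpoint iint {R : realType} (n : nat) : (n.-tuple R -> \bar R) -> \bar R :=
  match n return (n.-tuple R -> \bar R) -> \bar R with
  | 0 => fun F => F [tuple]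
  | n'.+1 => fun F =>
      (\int[@lebesgue_measure R]_(x in setT)
         iint (fun t : n'.-tuple R => F [tuple of x :: t]))%E
  end.

Definition lebN {R : realType} (n : nat) (A : set (n.-tuple R)) : \bar R :=
  iint (fun x => (\1_A x)%:E).

Definition eucl {R : realType} (n : nat) (x : n.-tuple R) : R :=
  Num.sqrt (\sum_(i < n) (tnth x i) ^+ 2).

Definition tsub {R : realType} (n : nat) (x y : n.-tuple R) : n.-tuple R :=
  [tuple tnth x i - tnth y i | i < n].

Definition Hs_sq {R : realType} (N : nat) (s : R) (u : N.-tuple R -> R) : \bar R :=
  (iint (fun x => (`|u x| ^+ 2)%:E) +
   iint (fun x => iint (fun y =>
     ((`|u x - u y| ^+ 2) / (eucl (tsub x y) `^ (N%:R + 2 * s)))%:E)))%E.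

Definition inHs {R : realType} (N : nat) (s : R) (u : N.-tuple R -> R) : Prop :=
  measurable_fun setT u /\ (Hs_sq s u < +oo)%E.

Definition Lint {R : realType} (N : nat) (q : R) (u : N.-tuple R -> R) : \bar R :=
  iint (fun x => (`|u x| `^ q)%:E).

Definition Linf_norm {R : realType} (N : nat) (a : N.-tuple R -> R) : R :=
  inf [set M : R | 0 <= M /\ lebN [set x | M < `|a x|] = 0%E].

Definition inLinf {R : realType} (N : nat) (a : N.-tuple R -> R) : Prop :=
  measurable_fun setT a /\
  exists M : R, lebN [set x | M < `|a x|] = 0%E.

Definition inHms {R : realType} (N : nat) (s : R)
    (f : (N.-tuple R -> R) -> R) : Prop :=
  (forall u v, inHs s u -> inHs s v -> f (u \+ v) = f u + f v) /\
  (forall (c : R) u, inHs s u -> f (fun x => c * u x) = c * f u) /\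
  (exists C : R, forall u, inHs s u -> `|f u| <= C * Num.sqrt (fine (Hs_sq s u))).

Definition Hms_norm {R : realType} (N : nat) (s : R)
    (f : (N.-tuple R -> R) -> R) : R :=
  sup [set r : R | exists u, inHs s u /\ (Hs_sq s u <= 1)%E /\ r = `|f u|].

Definition S1 {R : realType} (N : nat) (s p : R) : R :=
  inf [set r : R | exists u : N.-tuple R -> R,
         inHs s u /\ Hs_sq s u != 0%E /\ (Lint (p + 1) u < +oo)%E /\
         r = fine (Hs_sq s u) / (fine (Lint (p + 1) u)) `^ (2 / (p + 1))].

Definition Cp {R : realType} (N : nat) (p : R) (a : N.-tuple R -> R) : R :=
  (p * Linf_norm a) `^ (- (1 / (p - 1))) * ((p - 1) / p).

Definition Jfun {R : realType} (N : nat) (s p : R) (a : N.-tuple R -> R)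
    (f : (N.-tuple R -> R) -> R) (u : N.-tuple R -> R) : R :=
  Cp p a * (Num.sqrt (fine (Hs_sq s u))) `^ (2 * p / (p - 1)) - f u.

(* Main.v *)
Require Import Defs.
From HB Require Import structures.
From mathcomp Require Import all_boot all_order all_algebra.
From mathcomp Require Import all_classical all_reals all_analysis.
From mathcomp Require Import measurable_realfun.
From mathcomp Require Import ring lra.
Import Order.TTheory GRing.Theory Num.Theory.
Set Implicit Arguments. Unset Strict Implicit. Unset Printing Implicit Defensive.
Local Open Scope classical_set_scope.
Local Open Scope ring_scope.
Local Open Scope ereal_scope.

Lemma iint_ge0 (R : realType) n (F : n.-tuple R -> \bar R) :
  (forall t, 0 <= F t) -> 0 <= iint F.
Proof.
elim: n F => [|n IH] F F0 /=; first exact: F0.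
apply: integral_ge0 => x _; apply: IH => t; exact: F0.
Qed.

Lemma iint_meas (R : realType) n : forall d (T : measurableType d)
  (G : T * n.-tuple R -> \bar R),
  measurable_fun setT G -> (forall z, 0 <= G z) ->
  measurable_fun setT (fun x => iint (fun t => G (x, t))).
Proof.
elim: n => [|n IH] d T G mG G0 /=.
  apply: (measurableT_comp mG).
  apply/measurable_fun_pairP; split; first exact: measurable_id.
  exact: measurable_cst.
pose G2 := fun z : (T * R) * n.-tuple R => G (z.1.1, [tuple of z.1.2 :: z.2]).
have mG2 : measurable_fun setT G2.
  apply: (measurableT_comp mG).
  apply/measurable_fun_pairP; split.
    exact: (measurableT_comp measurable_fst measurable_fst).
  apply: measurable_cons.
    exact: (measurableT_comp measurable_snd measurable_fst).
  exact: measurable_snd.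
have := IH _ _ G2 mG2 (fun z => G0 _).
move=> mH.
apply: (@measurable_fun_fubini_tonelli_F _ _ T (measurableTypeR R) R (@lebesgue_measure R)
  (fun z => iint (fun t => G2 (z, t))) mH).
move=> z; apply: iint_ge0 => t; exact: G0.
Qed.

Lemma meas_cons (R : realType) n (F : n.+1.-tuple R -> \bar R) :
  measurable_fun setT F ->
  measurable_fun setT (fun z : R * n.-tuple R => F [tuple of z.1 :: z.2]).
Proof.
move=> mF; apply: (measurableT_comp mF).
apply: measurable_cons; [exact: measurable_fst|exact: measurable_snd].
Qed.

Lemma meas_cons1 (R : realType) n (F : n.+1.-tuple R -> \bar R) (x : R) :
  measurable_fun setT F ->
  measurable_fun setT (fun t : n.-tuple R => F [tuple of x :: t]).
Proof.
move=> mF; apply: (measurableT_comp mF).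
apply: measurable_cons; [exact: measurable_cst|exact: measurable_id].
Qed.

Lemma iintZ (R : realType) n (F : n.-tuple R -> \bar R) (k : R) :
  measurable_fun setT F -> (forall t, 0 <= F t) -> (0 <= k)%R ->
  iint (fun t => k%:E * F t) = k%:E * iint F.
Proof.
elim: n F => [|n IH] F mF F0 k0 //=.
transitivity (\int[@lebesgue_measure R]_(x in setT)
   (k%:E * iint (fun t : n.-tuple R => F [tuple of x :: t]))).
  apply: eq_integral => x _; apply: IH => //; exact: meas_cons1.
apply: ge0_integralZl_EFin => //.
  move=> x _; apply: iint_ge0 => t; exact: F0.
exact (@iint_meas R n _ (measurableTypeR R) (fun z => F [tuple of z.1 :: z.2]) (meas_cons mF) (fun z => F0 _)).
Qed.

Lemma iint_eq0 (R : realType) n (F G : n.-tuple R -> \bar R) :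
  measurable_fun setT F -> measurable_fun setT G ->
  (forall t, 0 <= F t) -> (forall t, 0 <= G t) ->
  (forall t, F t = 0 -> G t = 0) -> iint F = 0 -> iint G = 0.
Proof.
elim: n F G => [|n IH] F G mF mG F0 G0 FG //=; first exact: FG.
set phi := fun x => iint (fun t : n.-tuple R => F [tuple of x :: t]).
set psi := fun x => iint (fun t : n.-tuple R => G [tuple of x :: t]).
have mphi : measurable_fun setT phi.
  exact (@iint_meas R n _ (measurableTypeR R) (fun z => F [tuple of z.1 :: z.2]) (meas_cons mF) (fun z => F0 _)).
have mpsi : measurable_fun setT psi.
  exact (@iint_meas R n _ (measurableTypeR R) (fun z => G [tuple of z.1 :: z.2]) (meas_cons mG) (fun z => G0 _)).
have phi0 x : 0 <= phi x by apply: iint_ge0.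
move=> h.
have h2 : \int[@lebesgue_measure R]_(x in setT) `|phi x| = 0.
  rewrite -h; apply: eq_integral => x _; rewrite gee0_abs //.
have := (ae_eq_integral_abs (@lebesgue_measure R) measurableT mphi).1 h2.
move=> ae.
have ae2 : ae_eq (@lebesgue_measure R) setT psi (cst 0).
  apply: filterS ae => x H Tx; apply: IH (H Tx) => //.
  - exact: meas_cons1.
  - exact: meas_cons1.
  - move=> t; exact: FG.
have := @ae_eq_integral _ (measurableTypeR R) R (@lebesgue_measure R) setT
  (cst 0) psi measurableT mpsi (measurable_cst _) ae2.
by rewrite integral0.
Qed.

Lemma iint0 (R : realType) n : iint (fun _ : n.-tuple R => 0) = 0.
Proof.
elim: n => [|n IH] //=.
rewrite (eq_integral (cst 0)) ?integral0 // => x _; exact: IH.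
Qed.

Local Close Scope ereal_scope.

Lemma meas_ker (R : realType) N (s : R) (u : N.-tuple R -> R) :
  measurable_fun setT u ->
  measurable_fun setT (fun z : N.-tuple R * N.-tuple R =>
    ((`|u z.1 - u z.2| ^+ 2) / (eucl (tsub z.1 z.2) `^ (N%:R + 2 * s)))%:E).
Proof.
move=> mu; apply/measurable_EFinP => /=.
apply: measurable_funM.
  apply: measurable_funX; apply: (measurableT_comp (@normr_measurable R setT)).
  apply: measurable_funB.
    exact: (measurableT_comp mu measurable_fst).
  exact: (measurableT_comp mu measurable_snd).
have -> : (fun z : N.-tuple R * N.-tuple R =>
   (eucl (tsub z.1 z.2) `^ (N%:R + 2 * s))^-1) =
  (fun z => Num.sqrt (\sum_(i < N) (tnth z.1 i - tnth z.2 i) ^+ 2) `^ (- (N%:R + 2 * s))).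
  apply: funext => z; rewrite powRN /eucl /tsub.
  congr ((Num.sqrt _ `^ _)^-1); apply: eq_bigr => i _; by rewrite tnth_mktuple.
apply: (measurableT_comp (measurable_powR _)).
apply: (measurableT_comp (continuous_measurable_fun (@sqrt_continuous R))).
apply: measurable_sum => i; apply: measurable_funX; apply: measurable_funB.
  exact: (measurableT_comp (measurable_tnth i) measurable_fst).
exact: (measurableT_comp (measurable_tnth i) measurable_snd).
Qed.

Lemma meas_sq (R : realType) N (u : N.-tuple R -> R) :
  measurable_fun setT u -> measurable_fun setT (fun x => (`|u x| ^+ 2)%:E).
Proof.
move=> mu; apply/measurable_EFinP => /=; apply: measurable_funX.
exact: (measurableT_comp (@normr_measurable R setT)).
Qed.

Lemma Hs_sq_ge0 (R : realType) N (s : R) (u : N.-tuple R -> R) : (0 <= Hs_sq s u)%E.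
Proof.
apply: adde_ge0; apply: iint_ge0 => x.
  by rewrite lee_fin sqr_ge0.
apply: iint_ge0 => y; rewrite lee_fin divr_ge0 ?sqr_ge0 ?powR_ge0 //.
Qed.

Lemma Hs_sqZ (R : realType) N (s : R) (u : N.-tuple R -> R) (c : R) :
  measurable_fun setT u ->
  Hs_sq s (fun x => c * u x) = ((c ^+ 2)%:E * Hs_sq s u)%E.
Proof.
move=> mu; rewrite /Hs_sq ge0_muleDr; first last.
- apply: iint_ge0 => x; apply: iint_ge0 => y.
  by rewrite lee_fin divr_ge0 ?sqr_ge0 ?powR_ge0.
- by apply: iint_ge0 => x; rewrite lee_fin sqr_ge0.
congr (_ + _)%E.
  rewrite -iintZ.
  - congr iint; apply: funext => x.
    by rewrite -EFinM normrM exprMn real_normK ?num_real.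
  - exact: meas_sq.
  - by move=> t; rewrite lee_fin sqr_ge0.
  - exact: sqr_ge0.
have mK := meas_ker s mu.
have mKx : forall x, measurable_fun setT (fun y : N.-tuple R =>
    ((`|u x - u y| ^+ 2) / (eucl (tsub x y) `^ (N%:R + 2 * s)))%:E).
  move=> x.
  have mp : measurable_fun setT (fun y : N.-tuple R => (x, y)).
    by apply/measurable_fun_pairP; split; [exact: measurable_cst|exact: measurable_id].
  exact: (measurableT_comp mK mp).
rewrite -iintZ ?sqr_ge0 //.
- congr iint; apply: funext => x.
  rewrite -iintZ ?sqr_ge0 //.
  + congr iint; apply: funext => y.
    by rewrite -EFinM -mulrBr normrM exprMn real_normK ?num_real ?mulrA.
  + by move=> y; rewrite lee_fin divr_ge0 ?sqr_ge0 ?powR_ge0.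
- have K0 : forall z : N.-tuple R * N.-tuple R,
    (0 <= ((`|u z.1 - u z.2| ^+ 2) / (eucl (tsub z.1 z.2) `^ (N%:R + 2 * s)))%:E)%E.
    by move=> z; rewrite lee_fin divr_ge0 ?sqr_ge0 ?powR_ge0.
  exact (iint_meas mK K0).
- move=> x; apply: iint_ge0 => y.
  by rewrite lee_fin divr_ge0 ?sqr_ge0 ?powR_ge0.
Qed.

From mathcomp Require Import ring lra.

Lemma meas_pow (R : realType) N (u : N.-tuple R -> R) (q : R) :
  measurable_fun setT u -> measurable_fun setT (fun x => (`|u x| `^ q)%:E).
Proof.
move=> mu; apply/measurable_EFinP => /=.
apply: (measurableT_comp (measurable_powR q)).
exact: (measurableT_comp (@normr_measurable R setT)).
Qed.

Lemma LintZ (R : realType) N (u : N.-tuple R -> R) (q c : R) :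
  measurable_fun setT u ->
  Lint q (fun x => c * u x) = ((`|c| `^ q)%:E * Lint q u)%E.
Proof.
move=> mu; rewrite /Lint -iintZ.
- congr iint; apply: funext => x.
  by rewrite -EFinM normrM powRM.
- exact: meas_pow.
- by move=> t; rewrite lee_fin powR_ge0.
- exact: powR_ge0.
Qed.

Lemma Hs0_Lint0 (R : realType) N (s q : R) (u : N.-tuple R -> R) :
  q != 0 -> measurable_fun setT u -> Hs_sq s u = 0%E -> Lint q u = 0%E.
Proof.
move=> q0 mu H.
have A0 : iint (fun x => (`|u x| ^+ 2)%:E) = 0%E.
  move: H; rewrite /Hs_sq => /eqP; rewrite padde_eq0.
  - by case/andP => /eqP.
  - by apply: iint_ge0 => x; rewrite lee_fin sqr_ge0.
  - apply: iint_ge0 => x; apply: iint_ge0 => y.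
    by rewrite lee_fin divr_ge0 ?sqr_ge0 ?powR_ge0.
rewrite /Lint; apply: (iint_eq0 _ _ _ _ _ A0).
- exact: meas_sq.
- exact: meas_pow.
- by move=> t; rewrite lee_fin sqr_ge0.
- by move=> t; rewrite lee_fin powR_ge0.
- move=> t /eqP; rewrite eqe sqrf_eq0 normr_eq0 => /eqP ->.
  by rewrite normr0 powR0.
Qed.

Lemma inHs0 (R : realType) N (s : R) : inHs s (fun _ : N.-tuple R => 0) /\
  Hs_sq s (fun _ : N.-tuple R => 0) = 0%E.
Proof.
have m0 : measurable_fun setT (fun _ : N.-tuple R => (0:R)) by exact: measurable_cst.
have := Hs_sqZ s (0:R) m0; rewrite expr0n /= mul0e.
have -> : (fun x : N.-tuple R => 0 * (fun _ => (0:R)) x) = (fun _ => 0).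
  by apply: funext => x; rewrite mul0r.
move=> H; rewrite /inHs H; split => //; split => //; exact: ltry.
Qed.

Lemma f_bound (R : realType) N (s : R) (f : (N.-tuple R -> R) -> R) :
  inHms s f -> 0 <= Hms_norm s f /\
  (forall u, inHs s u -> `|f u| <= Hms_norm s f * Num.sqrt (fine (Hs_sq s u))).
Proof.
case=> [fadd [fZ [C fC]]].
rewrite /Hms_norm.
set HS := [set r | exists u, inHs s u /\ (Hs_sq s u <= 1)%E /\ r = `|f u|].
have [i0 H00] := inHs0 N s.
have f0 : f (fun _ => 0) = 0.
  have := fZ 0 _ i0.
  have -> : (fun x : N.-tuple R => 0 * (fun _ => (0:R)) x) = (fun _ => 0).
    by apply: funext => x; rewrite mul0r.
  by rewrite mul0r.
have ubHS : ubound HS (Num.max C 0).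
  move=> r [u [iu [H1 ->]]].
  have hf := fC u iu.
  have Hge := Hs_sq_ge0 s u.
  have fin : Hs_sq s u \is a fin_num.
    by rewrite ge0_fin_numE // (le_lt_trans H1) // ltry.
  have hs1 : fine (Hs_sq s u) <= 1 by rewrite -lee_fin fineK.
  have hs0 : 0 <= fine (Hs_sq s u) by rewrite -lee_fin fineK.
  have t1 : Num.sqrt (fine (Hs_sq s u)) <= 1 by rewrite -sqrtr1 ler_sqrt.
  have t0 : 0 <= Num.sqrt (fine (Hs_sq s u)) by exact: sqrtr_ge0.
  have hM0 : 0 <= Num.max C 0 by rewrite le_max lexx orbT.
  have hCM : C <= Num.max C 0 by rewrite le_max lexx.
  apply: (le_trans hf); nra.
have hasub : has_ubound HS by exists (Num.max C 0).
have HS0 : HS 0 by exists (fun _ => 0); split => //; split; [rewrite H00 //|by rewrite f0 normr0].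
split; first exact: ub_le_sup.
move=> u [mu Hlt].
have Hge := Hs_sq_ge0 s u.
have fin : Hs_sq s u \is a fin_num by rewrite ge0_fin_numE.
set h := fine (Hs_sq s u).
have Hh : Hs_sq s u = h%:E by rewrite fineK.
have h0 : 0 <= h by rewrite -lee_fin -Hh.
case: (eqVneq h 0) => [hz|hn0].
  have := fC u (conj mu Hlt); rewrite -/h hz sqrtr0 !mulr0 => H.
  by apply: (le_trans H).
have hp : 0 < h by rewrite lt_def hn0 h0.
set t := Num.sqrt h.
have tp : 0 < t by rewrite sqrtr_gt0.
pose v := fun x => t^-1 * u x.
have mv : measurable_fun setT v.
  by apply: measurable_funM => //; exact: measurable_cst.
have Hv : Hs_sq s v = 1%E.
  rewrite /v Hs_sqZ // Hh -EFinM exprVn sqr_sqrtr // mulVf //.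
have iv : inHs s v by split => //; rewrite Hv ltry.
have fv : f v = t^-1 * f u by rewrite /v fZ.
have HSv : HS `|f v| by exists v; split => //; split => //; rewrite Hv.
have le1 := ub_le_sup hasub HSv.
have -> : `|f u| = t * `|f v|.
  by rewrite fv normrM ger0_norm ?invr_ge0 ?(ltW tp) // mulrA mulfV ?gt_eqF // mul1r.
by rewrite mulrC ler_wpM2r // ltW.
Qed.

Unset Implicit Arguments.
Theorem lemma3p5 (R : realType) (N : nat) (s p : R)
    (a : N.-tuple R -> R) (f : (N.-tuple R -> R) -> R) :
  0 < s -> s < 1 -> 2 * s < N%:R ->
  1 < p -> p < (N%:R + 2 * s) / (N%:R - 2 * s) ->
  inLinf a -> (forall x, 0 < a x) ->
  inHms s f ->
  Hms_norm s f < Cp p a * S1 N s p `^ ((p + 1) / (2 * (p - 1))) ->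
  0 < inf [set r : R | exists u : N.-tuple R -> R,
             inHs s u /\ Lint (p + 1) u = 1%E /\ r = Jfun s p a f u].
Proof.
move=> s0 s1 sN p1 pN _ _ fH prem.
have [K0 fB] := f_bound fH.
set K := Hms_norm s f in K0 fB prem.
set C := Cp p a in prem *.
set e := (p + 1) / (2 * (p - 1)) in prem.
have p10 : p - 1 != 0 by rewrite subr_eq0 gt_eqF.
have pp10 : p + 1 != 0 by rewrite gt_eqF // ltr_wpDl // ltW // (lt_trans ltr01).
have e0 : 0 < e by rewrite divr_gt0 // ?mulr_gt0 // ?subr_gt0 // ltr_wpDl // ltW // (lt_trans ltr01).
set S1set := [set r : R | exists u : N.-tuple R -> R,
         inHs s u /\ Hs_sq s u != 0%E /\ (Lint (p + 1) u < +oo)%E /\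
         r = fine (Hs_sq s u) / (fine (Lint (p + 1) u)) `^ (2 / (p + 1))].
have sigE : S1 N s p = inf S1set by [].
set sig := S1 N s p in prem sigE.
have lbS1 : lbound S1set 0.
  move=> r [u [_ [_ [_ ->]]]]; apply: divr_ge0; last exact: powR_ge0.
  exact/fine_ge0/Hs_sq_ge0.
have hlb : has_lbound S1set by exists 0.
have [ne1|emp] := pselect (S1set !=set0); last first.
  have E0 : S1set = set0.
    by apply/seteqP; split => x // Hx; apply: emp; exists x.
  move: prem; rewrite sigE E0 inf0 powR0 ?gt_eqF // mulr0.
  by rewrite ltNge K0.
have sig0 : 0 <= sig by rewrite sigE; exact: lb_le_inf.
have sigp : 0 < sig.
  rewrite lt_def sig0 andbT; apply/eqP => sz; move: prem.
  by rewrite sz powR0 ?gt_eqF // mulr0 ltNge K0.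
have Xp : 0 < sig `^ e by exact: powR_gt0.
have Cpos : 0 < C.
  have : 0 < C * sig `^ e by apply: le_lt_trans K0 prem.
  by rewrite pmulr_lgt0.
case: (ne1) => r0 Sr0.
have r0ge : sig <= r0 by rewrite sigE; exact: ge_inf.
case: Sr0 => u0 [[mu0 Hlt0] [Hn00 [Lfin0 r0E]]].
have Lge0 : (0 <= Lint (p + 1) u0)%E by apply: iint_ge0 => x; rewrite lee_fin powR_ge0.
have Lfn : Lint (p + 1) u0 \is a fin_num by rewrite ge0_fin_numE.
set L := fine (Lint (p + 1) u0) in r0E.
have LE : Lint (p + 1) u0 = L%:E by rewrite fineK.
have L0 : 0 <= L by rewrite -lee_fin -LE.
have Ln0 : L != 0.
  apply/eqP => Lz; move: r0E; rewrite Lz powR0; last first.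
    by rewrite mulf_neq0 // ?invr_eq0 // pnatr_eq0.
  rewrite invr0 mulr0 => r00.
  by move: r0ge; rewrite r00 leNgt sigp.
set c := L `^ (- (p + 1)^-1).
pose u1 := fun x => c * u0 x.
have mu1 : measurable_fun setT u1.
  by apply: measurable_funM => //; exact: measurable_cst.
have L1 : Lint (p + 1) u1 = 1%E.
  rewrite /u1 LintZ // LE ger0_norm ?powR_ge0 // /c -powRrM mulNr mulVf //.
  by rewrite powR_inv1 // -EFinM mulVf.
have iu1 : inHs s u1.
  split => //; rewrite /u1 Hs_sqZ //; apply: lte_mul_pinfty => //.
  by rewrite lee_fin sqr_ge0.
have Sne : [set r : R | exists u : N.-tuple R -> R,
             inHs s u /\ Lint (p + 1) u = 1%E /\ r = Jfun s p a f u] !=set0.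
  by exists (Jfun s p a f u1), u1.
set A := sig `^ e.
have CAK : 0 < C * A - K by rewrite subr_gt0.
apply: (@lt_le_trans _ _ (Num.sqrt sig * (C * A - K))).
  by rewrite mulr_gt0 // sqrtr_gt0.
apply: lb_le_inf => // r [u [iu [L1u ->]]].
have Hn0 : Hs_sq s u != 0%E.
  apply/eqP => H0; have := Hs0_Lint0 pp10 iu.1 H0.
  by rewrite L1u => /eqP; rewrite eqe oner_eq0.
have Hge := Hs_sq_ge0 s u.
have fin : Hs_sq s u \is a fin_num by rewrite ge0_fin_numE //; exact: iu.2.
set h := fine (Hs_sq s u).
have Hh : Hs_sq s u = h%:E by rewrite fineK.
have h0 : 0 <= h by rewrite -lee_fin -Hh.
have hn0 : h != 0 by apply: contra Hn0; rewrite Hh => /eqP ->.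
have Sh : S1set h.
  exists u; split; first exact: iu.
  split; first exact: Hn0.
  split; first by rewrite L1u ltry.
  rewrite L1u (_ : fine (1%E : \bar R) = 1) //.
  by rewrite powR1 divr1.
have sigh : sig <= h by rewrite sigE; exact: ge_inf.
set t := Num.sqrt h.
set t0 := Num.sqrt sig.
have t0p : 0 < t0 by rewrite sqrtr_gt0.
have tt0 : t0 <= t by rewrite ler_sqrt.
have tp : 0 < t by exact: lt_le_trans tt0.
set T := t `^ ((p + 1) / (p - 1)).
have AE : A = t0 `^ ((p + 1) / (p - 1)).
  rewrite /t0 -powR12_sqrt // -powRrM /A /e; congr (_ `^ _).
  by field; rewrite p10.
have AT : A <= T.
  rewrite AE /T; apply: ge0_ler_powR => //.
  - by rewrite divr_ge0 // ?subr_ge0 ?ltW // ltr_wpDl // ltW // (lt_trans ltr01).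
  - by rewrite nnegrE ltW.
  - by rewrite nnegrE ltW.
have tE : t `^ (2 * p / (p - 1)) = t * T.
  have -> : 2 * p / (p - 1) = 1 + (p + 1) / (p - 1) by field; rewrite p10.
  rewrite powRD; first by rewrite powRr1 // ltW.
  by apply/implyP => _; rewrite gt_eqF.
have fu : f u <= K * t by apply: le_trans (ler_norm _) (fB u iu).
rewrite /Jfun -/C -/h -/t tE.
have h1 : C * (t * A) <= C * (t * T).
  apply: ler_wpM2l; first exact: ltW Cpos.
  by apply: ler_wpM2l; [exact: ltW tp|exact: AT].
have h2 : t0 * (C * A - K) <= t * (C * A - K).
  by apply: ler_wpM2r; [exact: ltW CAK|exact: tt0].
apply: (le_trans h2).
have -> : t * (C * A - K) = C * (t * A) - K * t by ring.
lra.
Qed.
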